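(* Let $M$ be a cubic $3$-pole (loops and parallel edges allowed) with exactly three dangling edges, incident with three pairwise distinct vertices $v_1,v_2,v_3$. For each vertex $x$ of $M$ choose an even $(2,2,2)$-pole $H_x$ and a bijection between the three connectors of $H_x$ and the three edge ends at $x$. Construct the $(2,2,2)$-pole $H_M(S_1,S_2,S_3)$ by replacing every vertex $x$ by $H_x$ and every edge of $M$ by two parallel ''strands'': for each edge of $M$ joining ends at $x$ and $y$ (possibly $x=y$ for a loop), perform the junction of the connector of $H_x$ assigned to the first end with the connector of $H_y$ assigned to the second end; for the dangling edge at $v_i$, the connector of $H_{v_i}$ assigned to that dangling edge is left unjoined and becomes $S_i$. Then $H_M(S_1,S_2,S_3)$ is an even $(2,2,2)$-pole.
   Context: A multipole consists of vertices and edges; each edge has two ends, each either incident with a vertex or free; a free end is a semiedge. All multipoles are cubic (every vertex incident with exactly three edge ends). Semiedges are partitioned into connectors; a $(2,2,2)$-pole has three connectors of size $2$. The junction of two connectors of size $2$ identifies their semiedges in pairs (along an arbitrary bijection) to form two edges. Let $\mathbb{K}=\{(0,1),(1,0),(1,1)\}\subset\mathbb{Z}_2\times\mathbb{Z}_2$. A colouring of a multipole assigns elements of $\mathbb{K}$ to edges so that at every vertex the three incident edge ends get distinct colours. Flow through a connector $S$: $\varphi_*(S)=\sum_{e\in S}\varphi(e)\in\mathbb{Z}_2\times\mathbb{Z}_2$. A $(2,2,2)$-pole is even if for every colouring $\varphi$ the number of its connectors $S$ with $\varphi_*(S)\ne0$ is even. *)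

(* Defs.v *)
From HB Require Import structures.
From mathcomp Require Import all_boot all_order all_algebra.
Set Implicit Arguments. Unset Strict Implicit. Unset Printing Implicit Defensive.
Import GRing.Theory.
Local Open Scope ring_scope.

Definition colour : Type := ('Z_2 * 'Z_2)%type.

(** A multipole: vertices, edges, edge ends.  Every end belongs to an edge
    ([end_edge]) and is either incident with a vertex or free ([end_vtx] = None). *)
Record multipole := Multipole {
  mvtx : finType;
  medg : finType;
  mend : finType;
  end_edge : mend -> medg;
  end_vtx : mend -> option mvtx }.

Definition cubic (P : multipole) : Prop :=
  forall v : mvtx P, #|[set d : mend P | end_vtx d == Some v]| = 3%N.

Definition two_ended (P : multipole) : Prop :=
  forall e : medg P, #|[set d : mend P | end_edge d == e]| = 2%N.

Definition colouring (P : multipole) (phi : medg P -> colour) : Prop :=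
  (forall e, phi e != 0) /\
  (forall d1 d2 : mend P, d1 != d2 -> end_vtx d1 != None ->
     end_vtx d1 = end_vtx d2 -> phi (end_edge d1) != phi (end_edge d2)).

Record pole222 := Pole222 {
  pmp :> multipole;
  pconn : 'I_3 -> 'I_2 -> mend pmp }.

Definition is_pole222 (P : pole222) : Prop :=
  (forall i k j l, pconn P i k = pconn P j l -> i = j /\ k = l) /\
  (forall d : mend P, end_vtx d = None <-> exists i k, pconn P i k = d).

Definition flow (P : pole222) (phi : medg P -> colour) (i : 'I_3) : colour :=
  \sum_(k < 2) phi (end_edge (pconn P i k)).

Definition even222 (P : pole222) : Prop :=
  forall phi : medg P -> colour, @colouring P phi ->
    ~~ odd #|[set i : 'I_3 | @flow P phi i != 0]|.

Section Construction.
Variables (M : multipole) (H : mvtx M -> pole222)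
  (gam : mend M -> 'I_3)        (* connector of H_x assigned to an end at x *)
  (flip : medg M -> bool)       (* bijection used for the junction along an edge *)
  (v : 'I_3 -> mvtx M)
  (g : 'I_3 -> mend M).         (* end at v_i of the i-th dangling edge *)

Definition cvtx := {x : mvtx M & mvtx (H x)}.
Definition bend := {x : mvtx M & mend (H x)}.
Definition bedg := {x : mvtx M & medg (H x)}.

Definition mkbend (x : mvtx M) (s : mend (H x)) : bend :=
  Tagged (fun z => mend (H z)) s.

(** the bijection between two connectors of size 2: identity or swap *)
Definition swap2 (b : bool) (k : 'I_2) : 'I_2 := if b then rev_ord k else k.

(** [jrel a b]: semiedges a and b are identified by a junction along an edge
    of M with ends d (at x) and d' (at y) *)
Definition jrel (a b : bend) : bool :=
  [exists d : mend M, exists d' : mend M, exists k : 'I_2,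
   exists x : mvtx M, exists y : mvtx M,
   [&& d != d', end_edge d == end_edge d', end_vtx d == Some x,
       end_vtx d' == Some y,
       a == mkbend (pconn (H x) (gam d) k) &
       b == mkbend (pconn (H y) (gam d') (swap2 (flip (end_edge d)) k))]].

Definition joined (a : bend) : bool := [exists b, jrel a b].

Definition Sbase (i : 'I_3) (k : 'I_2) : bend :=
  mkbend (pconn (H (v i)) (gam (g i)) k).

(** the ends of the composite: the ends of the H_x that are not joined
    (the second disjunct is redundant under the hypotheses of the theorem,
    it only makes the connectors S_i definable without proof obligations) *)
Definition kept (a : bend) : bool :=
  ~~ joined a || [exists i, exists k, a == Sbase i k].

Definition cend := {a : bend | kept a}.

Definition bedge_of (a : bend) : bedg :=
  Tagged (fun z => medg (H z)) (end_edge (tagged a)).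

(** edges of H_x whose ends are joined get merged *)
Definition erel (e f : bedg) : bool :=
  [exists a, exists b, [&& jrel a b, bedge_of a == e & bedge_of b == f]].

Definition eclass (e : bedg) : {set bedg} := [set f | connect erel e f].

Definition cedg := {S : {set bedg} | [exists e, S == eclass e]}.

Lemma eclass_is_class (e : bedg) : [exists e', eclass e == eclass e'].
Proof. by apply/existsP; exists e. Qed.

Definition cedge_of (e : bedg) : cedg := exist _ (eclass e) (eclass_is_class e).

Definition cend_edge (a : cend) : cedg := cedge_of (bedge_of (val a)).

Definition cend_vtx (a : cend) : option cvtx :=
  omap (fun w => Tagged (fun z => mvtx (H z)) w) (end_vtx (tagged (val a))).

Definition HM_mp : multipole := @Multipole cvtx cedg cend cend_edge cend_vtx.

Lemma Sbase_kept i k : kept (Sbase i k).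
Proof. by apply/orP; right; apply/existsP; exists i; apply/existsP; exists k. Qed.

Definition cconn (i : 'I_3) (k : 'I_2) : cend := exist _ (Sbase i k) (Sbase_kept i k).

Definition HM : pole222 := @Pole222 HM_mp cconn.

End Construction.

(* Main.v *)
Require Import Defs.
From mathcomp Require Import all_boot all_order all_algebra.
Set Implicit Arguments. Unset Strict Implicit. Unset Printing Implicit Defensive.

Lemma swap2K b : involutive (swap2 b).
Proof. by case: b => k //=; rewrite /swap2 rev_ordK. Qed.

Lemma jrel_sym1 (M : multipole) (H : mvtx M -> pole222) gam flip a b :
  @jrel M H gam flip a b -> jrel gam flip b a.
Proof.
rewrite /jrel => /existsP[d /existsP[d' /existsP[k /existsP[x /existsP[y]]]]].
case/and5P=> dd' ee xd yd' /andP[/eqP-> /eqP->].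
apply/existsP; exists d'; apply/existsP; exists d.
apply/existsP; exists (swap2 (flip (end_edge d)) k).
apply/existsP; exists y; apply/existsP; exists x.
by rewrite eq_sym dd' eq_sym ee xd yd' /= (eqP ee) swap2K !eqxx.
Qed.

Lemma erel_sym (M : multipole) (H : mvtx M -> pole222) gam flip :
  symmetric (@erel M H gam flip).
Proof.
have S1 a b : erel gam flip a b -> erel gam flip b a.
  rewrite /erel => /existsP[c /existsP[d /and3P[j e1 e2]]].
  by apply/existsP; exists d; apply/existsP; exists c; rewrite e1 e2 jrel_sym1.
by move=> a b; apply/idP/idP => /S1.
Qed.

Lemma cedge_of_erel (M : multipole) (H : mvtx M -> pole222) gam flip e f :
  @erel M H gam flip e f -> cedge_of gam flip e = cedge_of gam flip f.
Proof.
move=> ef; apply: val_inj => /=; apply/setP => z; rewrite !inE.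
apply: same_connect; first exact: sym_connect_sym (@erel_sym M H gam flip).
exact: connect1.
Qed.

Definition Fl (M : multipole) (H : mvtx M -> pole222) gam flip
  (phi : cedg H gam flip -> colour) (x : mvtx M) (i : 'I_3) : colour :=
  (\sum_(k < 2) phi (cedge_of gam flip
     (Tagged (fun z => medg (H z)) (end_edge (pconn (H x) i k)))))%R.

Lemma Fl_edge (M : multipole) (H : mvtx M -> pole222) gam flip phi d1 d2 x y :
  d1 != d2 -> end_edge d1 = end_edge d2 -> end_vtx d1 = Some x ->
  end_vtx d2 = Some y -> @Fl M H gam flip phi x (gam d1) = Fl phi y (gam d2).
Proof.
move=> dd ee xd yd; rewrite /Fl.
rewrite [RHS](reindex_inj (inv_inj (swap2K (flip (end_edge d1))))).
apply: eq_bigr => k _; congr (phi _); apply: cedge_of_erel.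
apply/existsP; exists (mkbend (pconn (H x) (gam d1) k)).
apply/existsP; exists (mkbend (pconn (H y) (gam d2) (swap2 (flip (end_edge d1)) k))).
rewrite !eqxx !andbT.
apply/existsP; exists d1; apply/existsP; exists d2; apply/existsP; exists k.
apply/existsP; exists x; apply/existsP; exists y.
by rewrite dd ee xd yd !eqxx.
Qed.



Lemma kept_vtx (M : multipole) (H : mvtx M -> pole222) gam flip v g x
  (s : mend (H x)) :
  (forall x, is_pole222 (H x)) -> end_vtx s != None ->
  @kept M H gam flip v g (mkbend s).
Proof.
move=> HP sv; apply/orP; left; apply/negP.
rewrite /joined /jrel => /existsP[b /existsP[d /existsP[d' /existsP[k /existsP[x0 /existsP[y]]]]]].
case/and5P=> _ _ _ _ /andP[/eqP/(congr1 (fun a : bend H => end_vtx (tagged a) == None)) /= E _].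
move: sv E; case: (HP x0) => _ /(_ (pconn (H x0) (gam d) k)) [_ ->]; last by exists (gam d), k.
by rewrite eqxx => /negbTE ->.
Qed.

Lemma induced_col (M : multipole) (H : mvtx M -> pole222) gam flip v g phi x :
  (forall x, is_pole222 (H x)) ->
  @colouring (HM H gam flip v g) phi ->
  @colouring (H x) (fun e => phi (cedge_of gam flip (Tagged (fun z => medg (H z)) e))).
Proof.
move=> HP [nz col]; split=> [e|s1 s2 ne sv ee]; first exact: nz.
have sv2 : end_vtx s2 != None by rewrite -ee.
pose c1 : cend H gam flip v g := exist _ (mkbend s1) (kept_vtx gam flip v g HP sv).
pose c2 : cend H gam flip v g := exist _ (mkbend s2) (kept_vtx gam flip v g HP sv2).
have := col c1 c2; apply.
- apply/eqP => /(congr1 val) /= /(congr1 (tagged_as (mkbend s1))).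
  by rewrite !tagged_asE; apply/eqP.
- by rewrite /= /cend_vtx /=; move: (sv); case: (end_vtx s1).
- by rewrite /= /cend_vtx /= ee.
Qed.

Lemma sum_two (T : finType) (P : pred T) (F : T -> nat) a b :
  a != b -> (forall d, P d = (d == a) || (d == b)) ->
  (\sum_(d | P d) F d = F a + F b)%N.
Proof.
move=> ab HP; rewrite (eq_bigl (fun d => d \in [set a; b])) => [|d]; last by rewrite !inE HP.
by rewrite big_setU1 ?inE // big_set1.
Qed.

Lemma two_set (T : finType) (P : pred T) a b c :
  #|[set d | P d]| = 2 -> P a -> P b -> P c -> a != b -> (c == a) || (c == b).
Proof.
move/eqP/cards2P=> [d1 [d2 [_ E]]].
have m z : P z -> (z == d1) || (z == d2).
  move=> Pz; have : z \in [set d | P d] by rewrite inE.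
  by rewrite E !inE.
move=> /m Ha /m Hb /m Hc.
case/orP: Ha => /eqP->; case/orP: Hb => /eqP->; case/orP: Hc => /eqP->;
  by rewrite ?eqxx ?orbT.
Qed.

Lemma even_sum (I : finType) (P : pred I) (F : I -> nat) :
  (forall i, P i -> ~~ odd (F i)) -> ~~ odd (\sum_(i | P i) F i).
Proof.
move=> HF; apply: (big_ind (fun n => ~~ odd n)) => //.
by move=> m n; rewrite oddD => /negbTE-> /negbTE->.
Qed.

Unset Implicit Arguments.

Theorem mainTheorem5 (M : multipole) (H : mvtx M -> pole222)
  (gam : mend M -> 'I_3) (flip : medg M -> bool)
  (v : 'I_3 -> mvtx M) (g : 'I_3 -> mend M) :
  cubic M -> two_ended M ->
  (forall x, [/\ cubic (H x), two_ended (H x), is_pole222 (H x) & even222 (H x)]) ->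
  (forall x d1 d2, end_vtx d1 = Some x -> end_vtx d2 = Some x ->
     gam d1 = gam d2 -> d1 = d2) ->
  injective v ->
  (forall i, end_vtx (g i) = Some (v i)) ->
  (forall i, exists d, [/\ d != g i, end_edge d = end_edge (g i) & end_vtx d = None]) ->
  (forall d, end_vtx d = None -> exists i, end_edge d = end_edge (g i)) ->
  even222 (HM H gam flip v g).
Proof.
move=> cM tM HH gamI vI gv gfree freeg phi col.
have HP x : is_pole222 (H x) by case: (HH x).
pose val d := if end_vtx d is Some x then Fl phi x (gam d) else 0%R.
pose b d : nat := val d != 0%R.
have bfree d : end_vtx d = None -> b d = 0%N by rewrite /b /val => ->; rewrite eqxx.
have A : #|[set i | flow phi i != 0%R]| = (\sum_i b (g i))%N.
  rewrite -sum1_card big_mkcond /=; apply: eq_bigr => i _.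
  by rewrite inE /b /val gv; case: (_ != _).
have B : ~~ odd (\sum_d b d).
  rewrite (partition_big (@end_vtx M) xpredT) //=.
  apply: even_sum => -[x|] _; last by rewrite big1 // => d /eqP; move/bfree.
  have surj i : exists2 d, end_vtx d = Some x & gam d = i.
    have : gam @: [set d | end_vtx d == Some x] = setT.
      apply/eqP; rewrite eqEcard subsetT cardsT card_ord card_in_imset ?cM //.
      by move=> d1 d2; rewrite !inE => /eqP h1 /eqP h2; apply: gamI h1 h2.
    move=> /setP/(_ i); rewrite inE => /imsetP[d]; rewrite inE => /eqP dx ->.
    by exists d.
  pose S := [set d | end_vtx d == Some x & val d != 0%R].
  have -> : (\sum_(d | end_vtx d == Some x) b d = \sum_(d in S) 1)%N.
    rewrite [RHS](eq_bigl (fun d => (end_vtx d == Some x) && (val d != 0%R))) => [|d]; last by rewrite /S inE.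
    rewrite big_mkcondr /=; apply: eq_bigr => d _; rewrite /b.
    by case: (_ != _).
  rewrite sum1_card -(card_in_imset (f := gam)); last first.
    by move=> d1 d2; rewrite !inE => /andP[/eqP h1 _] /andP[/eqP h2 _]; apply: gamI h1 h2.
  have -> : gam @: S = [set i | @flow (H x) (fun e => phi (cedge_of gam flip (Tagged (fun z => medg (H z)) e))) i != 0%R].
    apply/setP => i; rewrite !inE; apply/imsetP/idP.
      by case=> d; rewrite inE => /andP[/eqP dx]; rewrite /val dx => nz ->.
    move=> nz; case: (surj i) => d dx gd; exists d => //.
    by rewrite inE dx eqxx /= /val dx gd.
  case: (HH x) => _ _ _; apply.
  exact: induced_col.
rewrite (partition_big (@end_edge M) xpredT) //= in B.
pose D := [set end_edge (g i) | i in [set: 'I_3]].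
rewrite (bigID (fun e => e \in D)) /= oddD in B.
have R : ~~ odd (\sum_(e | e \notin D) \sum_(d | end_edge d == e) b d).
  apply: even_sum => e nD.
  have /eqP/cards2P[d1 [d2 [d12 E]]] := tM e.
  have mem z : (end_edge z == e) = (z == d1) || (z == d2).
    by move/setP: E => /(_ z); rewrite !inE.
  have e1 : end_edge d1 = e by apply/eqP; rewrite mem eqxx.
  have e2 : end_edge d2 = e by apply/eqP; rewrite mem eqxx orbT.
  have nf z : end_edge z = e -> exists x, end_vtx z = Some x.
    case E' : (end_vtx z) => [x|] ez; first by exists x.
    case: (freeg z E') => i ei; case/negP: nD; rewrite -ez ei.
    by apply/imsetP; exists i; rewrite ?inE.
  case: (nf _ e1) => x1 v1; case: (nf _ e2) => x2 v2.
  rewrite (sum_two _ d12 mem).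
  have -> : b d2 = b d1.
    by rewrite /b /val v1 v2 (Fl_edge phi d12 _ v1 v2) // e1 e2.
  by rewrite addnn odd_double.
rewrite (negbTE R) addbF in B.
rewrite A; move: B; rewrite big_imset /=; last first.
  move=> i j _ _ eij; apply/eqP; apply/negPn/negP => nij.
  case: (gfree i) => d [dgi ed vd].
  have gij : g i != g j.
    apply/eqP => /(congr1 (@end_vtx M)); rewrite !gv => -[] /vI/eqP.
    by rewrite (negbTE nij).
  have := @two_set _ (fun z => end_edge z == end_edge (g i)) (g i) (g j) d (tM _).
  rewrite /= -eij ed !eqxx => /(_ isT isT isT gij).
  rewrite (negbTE dgi) /= => /eqP dj; move: vd; rewrite dj gv.
  by [].
congr (~~ odd _); apply: eq_big => // i; first by rewrite !inE.
move=> _; case: (gfree i) => d [dgi ed vd].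
have mem z : (end_edge z == end_edge (g i)) = (z == g i) || (z == d).
  apply/idP/idP; last by case/orP=> /eqP->; rewrite ?ed eqxx.
  move=> ez; have := @two_set _ (fun z => end_edge z == end_edge (g i)) (g i) d z (tM _).
  rewrite eqxx ed eqxx ez => /(_ isT isT isT); apply; by rewrite eq_sym.
by rewrite (sum_two _ _ mem) ?(bfree d vd) ?addn0 // eq_sym.
Qed.
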